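(* Let $A,B\subset\mathbb N$ be such that $A\cup B$ is a set of pointwise recurrence for minimal distal systems. Then at least one of $A$, $B$ is a set of pointwise recurrence for minimal distal systems.
   Context: A system is a compact metric space with a homeomorphism $T$; minimal: no proper nonempty closed invariant subset; distal: $\inf_{n\in\mathbb Z}d(T^nx,T^nx')>0$ for $x\ne x'$. $R\subset\mathbb N$ is a set of pointwise recurrence for minimal distal systems if for every minimal distal system $(X,T)$ and every $x\in X$, $\inf_{n\in R}d(T^nx,x)=0$. *)

(* Defs.v *)
From Stdlib Require Import Reals List ZArith.
Open Scope R_scope.

Definition is_metric {X : Type} (d : X -> X -> R) : Prop :=
  (forall x y, 0 <= d x y) /\
  (forall x y, d x y = 0 <-> x = y) /\
  (forall x y, d x y = d y x) /\
  (forall x y z, d x z <= d x y + d y z).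

Definition is_open {X : Type} (d : X -> X -> R) (U : X -> Prop) : Prop :=
  forall x, U x -> exists eps, 0 < eps /\ forall y, d x y < eps -> U y.

Definition is_closed {X : Type} (d : X -> X -> R) (F : X -> Prop) : Prop :=
  is_open d (fun x => ~ F x).

Definition is_compact {X : Type} (d : X -> X -> R) : Prop :=
  forall (I : Type) (U : I -> X -> Prop),
    (forall i, is_open d (U i)) ->
    (forall x, exists i, U i x) ->
    exists l : list I, forall x, exists i, In i l /\ U i x.

Definition continuous {X : Type} (d : X -> X -> R) (f : X -> X) : Prop :=
  forall x eps, 0 < eps -> exists delta, 0 < delta /\
    forall y, d x y < delta -> d (f x) (f y) < eps.

Definition is_system {X : Type} (d : X -> X -> R) (T Tinv : X -> X) : Prop :=
  is_metric d /\ is_compact d /\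
  (forall x, T (Tinv x) = x) /\ (forall x, Tinv (T x) = x) /\
  continuous d T /\ continuous d Tinv.

Fixpoint iter {X : Type} (n : nat) (f : X -> X) (x : X) : X :=
  match n with O => x | S m => f (iter m f x) end.

Definition zpow {X : Type} (T Tinv : X -> X) (n : Z) : X -> X :=
  match n with
  | Z0 => fun x => x
  | Zpos p => iter (Pos.to_nat p) T
  | Zneg p => iter (Pos.to_nat p) Tinv
  end.

Definition is_minimal {X : Type} (d : X -> X -> R) (T : X -> X) : Prop :=
  forall Y : X -> Prop,
    is_closed d Y -> (exists y, Y y) -> (forall x, Y x <-> Y (T x)) ->
    forall x, Y x.

Definition is_distal {X : Type} (d : X -> X -> R) (T Tinv : X -> X) : Prop :=
  forall x x', x <> x' -> exists c, 0 < c /\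
    forall n : Z, c <= d (zpow T Tinv n x) (zpow T Tinv n x').

Definition pw_recurrence_minimal_distal (Rs : nat -> Prop) : Prop :=
  forall (X : Type) (d : X -> X -> R) (T Tinv : X -> X),
    is_system d T Tinv -> is_minimal d T -> is_distal d T Tinv ->
    forall x : X, forall eps, 0 < eps ->
      exists n, Rs n /\ d (iter n T x) x < eps.

(* Main.v *)
Require Import Defs.
From Stdlib Require Import Reals List ZArith Classical Lra Lia.
From Stdlib Require Import FunctionalExtensionality PropExtensionality ProofIrrelevance.
From mathcomp Require classical_sets boolp.
Set Bullet Behavior "Strict Subproofs".
Open Scope R_scope.

Lemma zorn_pre (T : Type) (t0 : T) (R : T -> T -> Prop) :
  (forall t, R t t) -> (forall r s t, R r s -> R s t -> R r t) ->
  (forall A : T -> Prop, (forall s t, A s -> A t -> R s t \/ R t s) ->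
     (exists a, A a) -> exists t, forall s, A s -> R s t) ->
  exists t, forall s, R t s -> R s t.
Proof.
  intros Hr Ht Hc.
  destruct (@classical_sets.ZL_preorder T t0 (fun a b => boolp.asbool (R a b))) as [t Ht'].
  - intros t; apply boolp.asboolT; apply Hr.
  - intros r s u H1 H2. apply boolp.asboolT.
    apply (Ht r s u); apply boolp.asboolW; assumption.
  - intros A HA. destruct (classic (exists a, A a)) as [Hn|Hn].
    + destruct (Hc A) as [t Hts].
      * intros s u Hs Hu. destruct (HA s u Hs Hu) as [H|H]; [left|right];
        apply boolp.asboolW; exact H.
      * exact Hn.
      * exists t. intros s Hs. apply boolp.asboolT. apply Hts; exact Hs.
    + exists t0. intros s Hs. exfalso. apply Hn. exists s; exact Hs.
  - exists t. intros s Hs. 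
    assert (H := Ht' s). simpl in H.
    apply boolp.asboolW. apply H. apply boolp.asboolT. exact Hs.
Qed.


Definition isF {T : Type} (F : (T -> Prop) -> Prop) : Prop :=
  F (fun _ => True) /\ (forall A B, F A -> F B -> F (fun x => A x /\ B x)) /\
  (forall A B : T -> Prop, (forall x, A x -> B x) -> F A -> F B) /\ ~ F (fun _ => False).
Definition isUF {T : Type} (F : (T -> Prop) -> Prop) : Prop :=
  isF F /\ forall A, F A \/ F (fun x => ~ A x).

Lemma F_top {T} (F : (T->Prop)->Prop) : isF F -> F (fun _ => True).
Proof. intros [H _]; exact H. Qed.
Lemma F_and {T} (F : (T->Prop)->Prop) A B : isF F -> F A -> F B -> F (fun x => A x /\ B x).
Proof. intros [_ [H _]]; apply H. Qed.
Lemma F_mono {T} (F : (T->Prop)->Prop) (A B : T -> Prop) : isF F -> (forall x, A x -> B x) -> F A -> F B.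
Proof. intros [_ [_ [H _]]]; apply H. Qed.
Lemma F_proper {T} (F : (T->Prop)->Prop) : isF F -> ~ F (fun _ => False).
Proof. intros [_ [_ [_ H]]]; exact H. Qed.
Lemma F_ne {T} (F : (T->Prop)->Prop) A : isF F -> F A -> exists x, A x.
Proof. intros HF HA. apply NNPP; intro Hn. apply (F_proper F HF).
  apply (F_mono F A); auto. intros x Hx; apply Hn; exists x; exact Hx. Qed.
Lemma F_and_ne {T} (F : (T->Prop)->Prop) A B : isF F -> F A -> F B -> exists x, A x /\ B x.
Proof. intros HF HA HB. apply (F_ne F); auto. apply F_and; auto. Qed.
Lemma UF_F {T} (F : (T->Prop)->Prop) : isUF F -> isF F.
Proof. intros [H _]; exact H. Qed.
Lemma UF_or {T} (F : (T->Prop)->Prop) A : isUF F -> F A \/ F (fun x => ~ A x).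
Proof. intros [_ H]; apply H. Qed.
Lemma UF_not {T} (F : (T->Prop)->Prop) A : isUF F -> ~ F A -> F (fun x => ~ A x).
Proof. intros HU Hn. destruct (UF_or F A HU); tauto. Qed.
Lemma UF_notnot {T} (F : (T->Prop)->Prop) A : isUF F -> F (fun x => ~ A x) -> ~ F A.
Proof. intros HU Hn HA. destruct (F_and_ne F _ _ (UF_F F HU) HA Hn) as [x [h1 h2]]; tauto. Qed.

Lemma UF_eq {T} (p q : (T->Prop)->Prop) : isUF p -> isUF q -> (forall A, p A -> q A) -> p = q.
Proof.
  intros Hp Hq H. apply functional_extensionality; intro A.
  apply propositional_extensionality; split; auto.
  intro HqA. apply NNPP; intro Hn. apply (UF_notnot q A Hq); auto.
  apply H. apply UF_not; auto.
Qed.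

Lemma ultra_ext {T} (F0 : (T->Prop)->Prop) : isF F0 -> exists U, isUF U /\ forall A, F0 A -> U A.
Proof.
  intros H0.
  set (S := {F : (T->Prop)->Prop | isF F /\ forall A, F0 A -> F A}).
  set (t0 := exist (fun F => isF F /\ forall A, F0 A -> F A) F0 (conj H0 (fun A h => h)) : S).
  destruct (zorn_pre S t0 (fun F G => forall A, proj1_sig F A -> proj1_sig G A)) as [M HM].
  - auto.
  - auto.
  - intros C HC [a Ha].
    set (G := fun A => exists F : S, C F /\ proj1_sig F A).
    assert (HG : isF G /\ forall A, F0 A -> G A).
    { split; [split; [|split; [|split]]|].
      - exists a. split; auto. apply F_top. apply (proj2_sig a).
      - intros A B [F1 [h1 k1]] [F2 [h2 k2]].
        destruct (HC F1 F2 h1 h2) as [r|r].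
        + exists F2. split; auto. apply F_and; auto. apply (proj2_sig F2).
        + exists F1. split; auto. apply F_and; auto. apply (proj2_sig F1).
      - intros A B HAB [F1 [h1 k1]]. exists F1; split; auto.
        apply (F_mono _ A); auto. apply (proj2_sig F1).
      - intros [F1 [h1 k1]]. apply (F_proper _ (proj1 (proj2_sig F1))); auto.
      - intros A hA. exists a; split; auto. apply (proj2_sig a); auto. }
    exists (exist _ G HG). intros s Hs A HA. simpl. exists s; auto.
  - destruct M as [M [HMF HM0]]. simpl in HM.
    exists M. split; auto. split; auto.
    intros A. destruct (classic (M A)) as [h|h]; [left; exact h|right].
    set (M' := fun B => exists C, M C /\ forall x, C x -> ~ A x -> B x).
    assert (HM' : isF M' /\ forall B, F0 B -> M' B).
    { split; [split; [|split; [|split]]|].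
      - exists (fun _ => True). split; auto. apply F_top; auto.
      - intros B1 B2 [C1 [h1 k1]] [C2 [h2 k2]]. exists (fun x => C1 x /\ C2 x).
        split. apply F_and; auto. intros x [c1 c2] nA; split; auto.
      - intros B1 B2 H12 [C1 [h1 k1]]. exists C1; split; auto.
      - intros [C1 [h1 k1]]. apply h. apply (F_mono _ C1); auto.
        intros x Cx. apply NNPP; intro nA. exact (k1 x Cx nA).
      - intros B hB. exists B. split; auto. }
    assert (Hsub := HM (exist _ M' HM')). simpl in Hsub.
    apply Hsub.
    + intros B HB. exists B; split; auto.
    + exists (fun _ => True). split; auto. apply F_top; auto.
Qed.


Definition UFZ := (Z -> Prop) -> Prop.
Definition usum (p q : UFZ) : UFZ := fun S => p (fun n => q (fun m => S (n + m)%Z)).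

Lemma usum_UF p q : isUF p -> isUF q -> isUF (usum p q).
Proof.
  intros Hp Hq. unfold usum. split; [split; [|split; [|split]]|].
  - apply (F_mono p (fun _ => True)); auto using UF_F. intros n _. apply F_top; auto using UF_F.
    apply F_top; auto using UF_F.
  - intros A B HA HB. apply (F_mono p (fun n => q (fun m => A (n+m)%Z) /\ q (fun m => B (n+m)%Z))); auto using UF_F.
    + intros n [h1 h2]. apply F_and; auto using UF_F.
    + apply F_and; auto using UF_F.
  - intros A B HAB HA. apply (F_mono p (fun n => q (fun m => A (n+m)%Z))); auto using UF_F.
    intros n h. apply (F_mono q (fun m => A (n+m)%Z)); auto using UF_F.
  - intro H. apply (F_proper p (UF_F p Hp)). apply (F_mono p _ _ (UF_F p Hp)) with (2 := H).
    intros n h. apply (F_proper q (UF_F q Hq)). exact h.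
  - intros A. destruct (UF_or p (fun n => q (fun m => A (n+m)%Z)) Hp) as [h|h]; [left; exact h|right].
    apply (F_mono p _ _ (UF_F p Hp)) with (2 := h). intros n hn.
    apply UF_not; auto.
Qed.

Lemma usum_assoc p q r : usum (usum p q) r = usum p (usum q r).
Proof.
  apply functional_extensionality; intro S. unfold usum.
  f_equal. apply functional_extensionality; intro a.
  f_equal. apply functional_extensionality; intro b.
  f_equal. apply functional_extensionality; intro c.
  rewrite Z.add_assoc. reflexivity.
Qed.

Definition closedU (C : UFZ -> Prop) : Prop :=
  forall p, isUF p -> ~ C p -> exists S, p S /\ forall q, isUF q -> C q -> ~ q S.

Lemma closedU_basic A : closedU (fun y => y A).
Proof.
  intros p Hp Hn. exists (fun n => ~ A n). split.
  - apply UF_not; auto.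
  - intros q Hq HqA h. exact (UF_notnot q A Hq h HqA).
Qed.

Lemma fip_compact (Cs : (UFZ -> Prop) -> Prop) :
  (forall C, Cs C -> closedU C) ->
  (forall l : list (UFZ -> Prop), (forall C, In C l -> Cs C) ->
     exists q, isUF q /\ forall C, In C l -> C q) ->
  exists q, isUF q /\ forall C, Cs C -> C q.
Proof.
  intros Hcl Hfin.
  set (G := fun S : Z -> Prop => exists l : list (UFZ -> Prop), (forall C, In C l -> Cs C) /\
              forall q, isUF q -> (forall C, In C l -> C q) -> q S).
  assert (HG : isF G).
  { split; [|split; [|split]].
    - exists nil. split. intros C []. intros q Hq _. apply F_top; auto using UF_F.
    - intros A B [l1 [h1 k1]] [l2 [h2 k2]]. exists (l1 ++ l2). split.
      + intros C HC. apply in_app_or in HC. destruct HC; auto.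
      + intros q Hq Hall. apply F_and; auto using UF_F.
        * apply k1; auto. intros C HC; apply Hall; apply in_or_app; auto.
        * apply k2; auto. intros C HC; apply Hall; apply in_or_app; auto.
    - intros A B HAB [l [h k]]. exists l. split; auto. intros q Hq Hall.
      apply (F_mono q A); auto using UF_F. apply k; auto.
    - intros [l [h k]]. destruct (Hfin l h) as [q [Hq Hall]].
      exact (F_proper q (UF_F q Hq) (k q Hq Hall)). }
  destruct (ultra_ext G HG) as [p [Hp HGp]].
  exists p. split; auto. intros C HC. apply NNPP; intro Hn.
  destruct (Hcl C HC p Hp Hn) as [S [HpS HS]].
  apply (UF_notnot p S Hp); auto. apply HGp.
  exists (C :: nil). split.
  - intros D [<-|[]]; auto.
  - intros q Hq Hall. apply UF_not; auto. apply HS; auto. apply Hall. left; auto.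
Qed.


Lemma chain_min (T : Type) (R : T -> T -> Prop) (C : T -> Prop) (a : T) :
  (forall t, R t t) -> (forall r s t, R r s -> R s t -> R r t) ->
  (forall s t, C s -> C t -> R s t \/ R t s) -> C a ->
  forall l : list T, (forall x, In x l -> C x) -> exists m, C m /\ forall x, In x l -> R x m.
Proof.
  intros Hr Htr Htot Ha l. induction l as [|b l IH]; intros Hl.
  - exists a. split; auto. intros x [].
  - destruct IH as [m [Cm Hm]]. { intros x Hx; apply Hl; right; auto. }
    assert (Cb : C b) by (apply Hl; left; auto).
    destruct (Htot b m Cb Cm) as [H|H].
    + exists m. split; auto. intros x [<-|Hx]; auto.
    + exists b. split; auto. intros x [<-|Hx]; eauto.
Qed.

Definition goodK (L : UFZ -> Prop) (K : UFZ -> Prop) : Prop :=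
  closedU K /\ (exists q, K q) /\ (forall q, K q -> isUF q) /\
  (forall p q, K p -> K q -> K (usum p q)) /\ (forall q, K q -> L q).

Lemma minimal_goodK (L : UFZ -> Prop) K0 : goodK L K0 ->
  exists K, goodK L K /\ forall K', goodK L K' -> (forall q, K' q -> K q) -> forall q, K q -> K' q.
Proof.
  intros H0.
  set (S := {K | goodK L K}).
  destruct (zorn_pre S (exist _ K0 H0) (fun K1 K2 => forall q, proj1_sig K2 q -> proj1_sig K1 q))
    as [M HM].
  - auto.
  - auto.
  - intros C Htot [a Ca].
    set (I := fun q => forall K : S, C K -> proj1_sig K q).
    assert (HI : goodK L I).
    { destruct a as [Ka Ga]. destruct Ga as [Gc [Gn [Gu [Gs Gl]]]].
      split; [|split; [|split; [|split]]].
      - intros p Hp Hn. unfold I in Hn. apply not_all_ex_not in Hn. destruct Hn as [K HK].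
        apply imply_to_and in HK. destruct HK as [CK nK].
        destruct (proj1 (proj2_sig K) p Hp nK) as [T0 [h1 h2]].
        exists T0. split; [exact h1|]. intros q Hq Iq. apply h2; auto.
      - destruct (fip_compact (fun D => exists K : S, C K /\ D = proj1_sig K)) as [q [Hq Hall]].
        + intros D [K [_ ->]]. apply (proj1 (proj2_sig K)).
        + intros l Hl.
          assert (Hl' : exists l' : list S, (forall K, In K l' -> C K) /\
                     forall D, In D l -> exists K, In K l' /\ D = proj1_sig K).
          { clear -Hl. induction l as [|D l IH].
            - exists nil. split. intros K []. intros D [].
            - destruct IH as [l' [h1 h2]]. { intros; apply Hl; right; auto. }
              destruct (Hl D (or_introl eq_refl)) as [K [CK ->]].
              exists (K :: l'). split.
              + intros K' [<-|HK']; auto.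
              + intros D' [<-|HD'].
                * exists K. split; auto. left; auto.
                * destruct (h2 D' HD') as [K' [h3 h4]]. exists K'. split; auto. right; auto. }
          destruct Hl' as [l' [h1 h2]].
          destruct (chain_min S (fun K1 K2 => forall q, proj1_sig K2 q -> proj1_sig K1 q) C
                      (exist _ Ka (conj Gc (conj Gn (conj Gu (conj Gs Gl)))))) with (l := l')
            as [m [Cm Hm]]; auto.
          destruct (proj1 (proj2 (proj2_sig m))) as [q Hq].
          exists q. split.
          * apply (proj1 (proj2 (proj2 (proj2_sig m)))); auto.
          * intros D HD. destruct (h2 D HD) as [K [h3 ->]]. apply (Hm K); auto.
        + exists q. intros K CK. apply Hall. exists K; auto.
      - intros q Iq. apply Gu. apply (Iq _ Ca).
      - intros p q Ip Iq K CK. apply (proj1 (proj2 (proj2 (proj2 (proj2_sig K))))); auto.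
      - intros q Iq. apply Gl. apply (Iq _ Ca). }
    exists (exist _ I HI). intros s Cs q Iq. apply Iq; auto.
  - exists (proj1_sig M). split.
    + apply (proj2_sig M).
    + intros K' G' H'. apply (HM (exist _ K' G')). exact H'.
Qed.


Lemma ellis (L : UFZ -> Prop) K0 : goodK L K0 -> exists p, L p /\ isUF p /\ usum p p = p.
Proof.
  intros H0. destruct (minimal_goodK L K0 H0) as [K [GK HK]].
  destruct GK as [Kc [[x Kxx] [Ku [Ks Kl]]]].
  assert (Ux : isUF x) by auto.
  set (Kx := fun q => exists y, K y /\ q = usum y x).
  assert (GKx : goodK L Kx).
  { split; [|split; [|split; [|split]]].
    - intros p Hp Hn.
      set (Cs := fun D : UFZ -> Prop => D = K \/ exists A, p A /\ D = (fun y => usum y x A)).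
      assert (Hno : ~ forall l : list (UFZ -> Prop), (forall C, In C l -> Cs C) ->
                      exists q, isUF q /\ forall C, In C l -> C q).
      { intro Hf. destruct (fip_compact Cs) as [q [Hq Hall]]; auto.
        - intros C [->|[A [_ ->]]]; auto.
          exact (closedU_basic (fun n => x (fun m => A (n + m)%Z))).
        - apply Hn. exists q. split.
          + apply Hall. left; auto.
          + apply UF_eq; auto. apply usum_UF; auto.
            intros A HA. apply (Hall (fun y => usum y x A)). right. exists A; auto. }
      apply not_all_ex_not in Hno. destruct Hno as [l Hl].
      apply imply_to_and in Hl. destruct Hl as [Hl Hnc].
      assert (Hst : exists As, p As /\ forall y, K y -> usum y x As -> forall D, In D l -> D y).
      { clear Hnc. induction l as [|D l IH].
        - exists (fun _ => True). split.
          + apply F_top; apply UF_F; auto.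
          + intros y _ _ D [].
        - destruct IH as [As [hp hy]]. { intros; apply Hl; right; auto. }
          destruct (Hl D (or_introl eq_refl)) as [->|[A [hA ->]]].
          + exists As. split; auto. intros y Ky hu D' [<-|HD']; auto. apply (hy y Ky hu); auto.
          + exists (fun n => As n /\ A n). split.
            * apply F_and; auto using UF_F.
            * intros y Ky hu D' [<-|HD'].
              -- apply (F_mono _ _ _ (UF_F _ (usum_UF y x (Ku y Ky) Ux))) with (2 := hu).
                 intros n [_ h]; exact h.
              -- apply (hy y Ky); auto.
                 apply (F_mono _ _ _ (UF_F _ (usum_UF y x (Ku y Ky) Ux))) with (2 := hu).
                 intros n [h _]; exact h. }
      destruct Hst as [As [hp hy]]. exists As. split; auto.
      intros q Hq [y [Ky ->]] hq. apply Hnc. exists y. split; auto. apply hy; auto.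
    - exists (usum x x). exists x. auto.
    - intros q [y [Ky ->]]. apply usum_UF; auto.
    - intros a b [y1 [K1 ->]] [y2 [K2 ->]]. exists (usum (usum y1 x) y2). split.
      + apply Ks; auto.
      + rewrite (usum_assoc (usum y1 x) y2 x). reflexivity.
    - intros q [y [Ky ->]]. apply Kl. apply Ks; auto. }
  assert (HKx : forall q, K q -> Kx q).
  { apply HK; auto. intros q [y [Ky ->]]. apply Ks; auto. }
  destruct (HKx x Kxx) as [y0 [Ky0 Hy0]].
  set (H := fun y => K y /\ usum y x = x).
  assert (GH : goodK L H).
  { split; [|split; [|split; [|split]]].
    - intros p Hp Hn. destruct (classic (K p)) as [Kp|nKp].
      + assert (Hne : usum p x <> x) by (intro E; apply Hn; split; auto).
        assert (Hex : exists A, usum p x A /\ ~ x A).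
        { apply NNPP; intro Hc. apply Hne. apply (UF_eq (usum p x) x); [apply usum_UF; auto|exact Ux|].
          intros A HA. apply NNPP; intro nA. apply Hc. exists A; auto. }
        destruct Hex as [A [hA nA]].
        exists (fun n => x (fun m => A (n + m)%Z)). split; [exact hA|].
        intros q Hq [Kq Eq] hq. apply nA. rewrite <- Eq. exact hq.
      + destruct (Kc p Hp nKp) as [S [h1 h2]]. exists S. split; [exact h1|].
        intros q Hq [Kq _]. apply h2; auto.
    - exists y0. split; auto.
    - intros q [Kq _]; auto.
    - intros a b [Ka Ea] [Kb Eb]. split; auto. rewrite usum_assoc, Eb, Ea. reflexivity.
    - intros q [Kq _]; auto. }
  assert (HH : forall q, K q -> H q).
  { apply HK; auto. intros q [Kq _]; auto. }
  destruct (HH x Kxx) as [_ E]. exists x. auto.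
Qed.


Section Zp.
Context {X : Type} (T Ti : X -> X) (H1 : forall x, T (Ti x) = x) (H2 : forall x, Ti (T x) = x).

Lemma zpow_succ n x : zpow T Ti (Z.succ n) x = T (zpow T Ti n x).
Proof.
  destruct n as [|p|p].
  - reflexivity.
  - assert (E : Z.succ (Zpos p) = Zpos (Pos.succ p)) by lia. rewrite E.
    unfold zpow. rewrite Pos2Nat.inj_succ. reflexivity.
  - destruct (Pos.succ_pred_or p) as [->|E].
    + simpl. rewrite H1. reflexivity.
    + rewrite <- E. assert (E2 : Z.succ (Zneg (Pos.succ (Pos.pred p))) = Zneg (Pos.pred p)) by lia.
      rewrite E2. unfold zpow. rewrite Pos2Nat.inj_succ. simpl. rewrite H1. reflexivity.
Qed.

Lemma zpow_pred n x : zpow T Ti (Z.pred n) x = Ti (zpow T Ti n x).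
Proof.
  rewrite <- (Z.succ_pred n) at 2. rewrite zpow_succ. rewrite H2. reflexivity.
Qed.

Lemma zpow_add n m x : zpow T Ti (n + m) x = zpow T Ti n (zpow T Ti m x).
Proof.
  revert x. induction n using Z.peano_ind; intro x.
  - reflexivity.
  - rewrite Z.add_succ_l, !zpow_succ, IHn. reflexivity.
  - rewrite Z.add_pred_l, !zpow_pred, IHn. reflexivity.
Qed.

End Zp.

Lemma cont_comp {X} (d : X -> X -> R) f g : continuous d f -> continuous d g -> continuous d (fun x => f (g x)).
Proof.
  intros Hf Hg x eps He. destruct (Hf (g x) eps He) as [d1 [h1 k1]].
  destruct (Hg x d1 h1) as [d2 [h2 k2]]. exists d2. split; auto.
Qed.

Lemma zpow_cont {X} (d : X -> X -> R) T Ti :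
  (forall x, T (Ti x) = x) -> (forall x, Ti (T x) = x) ->
  continuous d T -> continuous d Ti -> forall n, continuous d (zpow T Ti n).
Proof.
  intros H1 H2 HT HTi n. induction n using Z.peano_ind.
  - intros x eps He. exists eps. split; auto.
  - assert (E : zpow T Ti (Z.succ n) = fun x => T (zpow T Ti n x)).
    { apply functional_extensionality; intro x; apply zpow_succ; auto. }
    rewrite E. apply cont_comp; auto.
  - assert (E : zpow T Ti (Z.pred n) = fun x => Ti (zpow T Ti n x)).
    { apply functional_extensionality; intro x; apply zpow_pred; auto. }
    rewrite E. apply cont_comp; auto.
Qed.

Lemma iter_comm {A B} (h : A -> B) f g : (forall a, h (f a) = g (h a)) ->
  forall n a, h (Defs.iter n f a) = Defs.iter n g (h a).
Proof. intros H n; induction n; intro a; simpl; auto. rewrite H, IHn; auto. Qed.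

Lemma zpow_comm {A B} (h : A -> B) f fi g gi : (forall a, h (f a) = g (h a)) ->
  (forall a, h (fi a) = gi (h a)) -> forall n a, h (zpow f fi n a) = zpow g gi n (h a).
Proof. intros H Hi n a. destruct n; simpl; auto; apply iter_comm; auto. Qed.


Section Met.
Context {X : Type} (d : X -> X -> R) (Hm : is_metric d).
Lemma d_pos x y : 0 <= d x y. Proof. apply (proj1 Hm). Qed.
Lemma d_xx x : d x x = 0. Proof. apply (proj1 (proj2 Hm)). reflexivity. Qed.
Lemma d_eq x y : d x y = 0 -> x = y. Proof. apply (proj1 (proj2 Hm)). Qed.
Lemma d_sym x y : d x y = d y x. Proof. apply (proj1 (proj2 (proj2 Hm))). Qed.
Lemma d_tri x y z : d x z <= d x y + d y z. Proof. apply (proj2 (proj2 (proj2 Hm))). Qed.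

Lemma ball_open x r : is_open d (fun y => d x y < r).
Proof.
  intros y Hy. exists (r - d x y). split; [lra|]. intros z Hz.
  pose proof (d_tri x y z). lra.
Qed.

Definition uconv (U : (X -> Prop) -> Prop) x := forall eps, 0 < eps -> U (fun y => d x y < eps).

Lemma uconv_unique U x y : isF U -> uconv U x -> uconv U y -> x = y.
Proof.
  intros HU Hx Hy. apply d_eq. apply NNPP; intro Hn.
  pose proof (d_pos x y). set (e := d x y / 2).
  assert (He : 0 < e) by (unfold e; lra).
  destruct (F_and_ne U _ _ HU (Hx e He) (Hy e He)) as [z [h1 h2]].
  pose proof (d_tri x z y). rewrite (d_sym z y) in H0. unfold e in *. lra.
Qed.

Lemma comp_UF : is_compact d -> forall U, isUF U -> exists x, uconv U x.
Proof.
  intros Hc U HU. apply NNPP; intro Hn.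
  set (V := fun (i : X * R) y => 0 < snd i /\ ~ U (fun z => d (fst i) z < snd i) /\ d (fst i) y < snd i).
  destruct (Hc (X * R)%type V) as [l Hl].
  - intros i y [h1 [h2 h3]]. destruct (ball_open (fst i) (snd i) y h3) as [e [he k]].
    exists e. split; auto. intros z Hz. unfold V. auto.
  - intros y. assert (Hy : ~ uconv U y) by (intro h; apply Hn; exists y; auto).
    unfold uconv in Hy. apply not_all_ex_not in Hy. destruct Hy as [e He].
    apply imply_to_and in He. destruct He as [He1 He2].
    exists (y, e). unfold V; simpl. rewrite d_xx. auto.
  - assert (Hall : forall l', U (fun y => forall i, In i l' -> ~ V i y)).
    { intro l'. induction l' as [|i l' IH].
      - apply (F_mono U (fun _ => True)); [apply UF_F; auto| |apply F_top; apply UF_F; auto].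
        intros y _ i [].
      - assert (Hi : U (fun y => ~ V i y)).
        { apply UF_not; auto. intro HV.
          destruct (F_ne U _ (UF_F U HU) HV) as [y [h1 [h2 h3]]].
          apply h2. apply (F_mono U (V i)); [apply UF_F; auto| |exact HV].
          intros z [_ [_ h]]; exact h. }
        apply (F_mono U _ _ (UF_F U HU)) with (2 := F_and U _ _ (UF_F U HU) Hi IH).
        intros y [h1 h2] j [<-|Hj]; auto. }
    destruct (F_ne U _ (UF_F U HU) (Hall l)) as [y Hy].
    destruct (Hl y) as [i [h1 h2]]. exact (Hy i h1 h2).
Qed.

Lemma UF_comp : (forall U, isUF U -> exists x, uconv U x) -> is_compact d.
Proof.
  intros HU I V Vo Vc. apply NNPP; intro Hn.
  set (F0 := fun A : X -> Prop => exists l : list I, forall x, (forall i, In i l -> ~ V i x) -> A x).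
  assert (HF : isF F0).
  { split; [|split; [|split]].
    - exists nil. auto.
    - intros A B [l1 h1] [l2 h2]. exists (l1 ++ l2). intros x Hx. split.
      + apply h1. intros i Hi. apply Hx. apply in_or_app; auto.
      + apply h2. intros i Hi. apply Hx. apply in_or_app; auto.
    - intros A B HAB [l h]. exists l. auto.
    - intros [l h]. apply Hn. exists l. intros x. apply NNPP; intro Hx.
      apply (h x). intros i Hi HVi. apply Hx. exists i; auto. }
  destruct (ultra_ext F0 HF) as [W [HW HW0]].
  destruct (HU W HW) as [x Hx].
  destruct (Vc x) as [i Hi]. destruct (Vo i x Hi) as [e [he k]].
  assert (h1 : W (fun y => d x y < e)) by (apply Hx; auto).
  assert (h2 : W (fun y => ~ V i y)).
  { apply HW0. exists (i :: nil). intros y Hy. apply Hy. left; auto. }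
  destruct (F_and_ne W _ _ (UF_F W HW) h1 h2) as [y [k1 k2]]. apply k2; auto.
Qed.

End Met.

Definition push {A B : Type} (f : A -> B) (U : (A -> Prop) -> Prop) : (B -> Prop) -> Prop :=
  fun S => U (fun a => S (f a)).

Lemma push_UF {A B} (f : A -> B) U : isUF U -> isUF (push f U).
Proof.
  intros HU. unfold push. split; [split; [|split; [|split]]|].
  - apply F_top; apply UF_F; auto.
  - intros P Q h1 h2. apply F_and; auto. apply UF_F; auto.
  - intros P Q HPQ h. apply (F_mono U _ _ (UF_F U HU)) with (2 := h). auto.
  - apply (F_proper U (UF_F U HU)).
  - intros P. apply (UF_or U (fun a => P (f a)) HU).
Qed.


Section Semi.
Context {X : Type} (d : X -> X -> R) (T Ti : X -> X) (Hs : is_system d T Ti).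

Let Hm : is_metric d := proj1 Hs.
Let Hc : is_compact d := proj1 (proj2 Hs).
Let H1 : forall x, T (Ti x) = x := proj1 (proj2 (proj2 Hs)).
Let H2 : forall x, Ti (T x) = x := proj1 (proj2 (proj2 (proj2 Hs))).
Let HT : continuous d T := proj1 (proj2 (proj2 (proj2 (proj2 Hs)))).
Let HTi : continuous d Ti := proj2 (proj2 (proj2 (proj2 (proj2 Hs)))).

Lemma Y_zpow (Y : X -> Prop) : (forall x, Y x <-> Y (T x)) -> forall n x, Y x -> Y (zpow T Ti n x).
Proof.
  intros HY n. induction n using Z.peano_ind; intros x Hx.
  - exact Hx.
  - rewrite (zpow_succ T Ti H1). apply (proj1 (HY _)). apply IHn. exact Hx.
  - rewrite (zpow_pred T Ti H1 H2). apply HY. rewrite H1. auto.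
Qed.

Lemma closed_lim (Y : X -> Prop) U z : is_closed d Y -> isF U -> uconv d U z -> U Y -> Y z.
Proof.
  intros HY HU Hz HUY. apply NNPP; intro Hn. destruct (HY z Hn) as [e [he k]].
  destruct (F_and_ne U _ _ HU (Hz e he) HUY) as [y [h1 h2]]. exact (k y h1 h2).
Qed.

Lemma sum_lim (w : X) p q yq z : isUF p -> isUF q ->
  uconv d (push (fun n => zpow T Ti n w) q) yq ->
  uconv d (push (fun n => zpow T Ti n yq) p) z ->
  uconv d (push (fun n => zpow T Ti n w) (usum p q)) z.
Proof.
  intros Hp Hq Hyq Hz eps He. unfold push, usum.
  apply (F_mono p _ _ (UF_F p Hp)) with (2 := Hz (eps/2) ltac:(lra)).
  intros n Hn. simpl in Hn.
  destruct (zpow_cont d T Ti H1 H2 HT HTi n yq (eps/2) ltac:(lra)) as [del [hd kd]].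
  apply (F_mono q _ _ (UF_F q Hq)) with (2 := Hyq del hd).
  intros m Hmm. simpl in Hmm. rewrite (zpow_add T Ti H1 H2).
  pose proof (d_tri d Hm z (zpow T Ti n yq) (zpow T Ti n (zpow T Ti m w))).
  pose proof (kd _ Hmm). lra.
Qed.

Lemma semisimple : is_distal d T Ti -> forall Y, is_closed d Y -> (forall x, Y x <-> Y (T x)) ->
  forall w y, Y y -> (forall eps, 0 < eps -> exists n, d (zpow T Ti n w) y < eps) -> Y w.
Proof.
  intros Hd Y HYc HY w y Yy Hwy.
  set (f := fun n => zpow T Ti n w).
  set (L := fun p => isUF p /\ exists y', uconv d (push f p) y' /\ Y y').
  assert (GL : goodK L L).
  { split; [|split; [|split; [|split]]].
    - intros p Hp Hn.
      destruct (comp_UF d Hm Hc (push f p) (push_UF f p Hp)) as [y' Hy'].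
      assert (nY : ~ Y y') by (intro h; apply Hn; split; eauto).
      destruct (HYc y' nY) as [e [he k]].
      exists (fun n => d y' (f n) < e/2). split; [apply (Hy' (e/2)); lra|].
      intros q Hq [_ [y'' [Hy'' Yy'']]] hq.
      destruct (F_and_ne q _ _ (UF_F q Hq) hq (Hy'' (e/2) ltac:(lra))) as [n [k1 k2]].
      apply (k y''); auto. pose proof (d_tri d Hm y' (f n) y''). rewrite (d_sym d Hm (f n) y'') in H. lra.
    - set (F0 := fun S : Z -> Prop => exists e, 0 < e /\ forall n, d (f n) y < e -> S n).
      assert (HF : isF F0).
      { split; [|split; [|split]].
        - exists 1. split; [lra|auto].
        - intros A B [e1 [h1 k1]] [e2 [h2 k2]]. exists (Rmin e1 e2). split.
          + apply Rmin_glb_lt; auto.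
          + intros n Hn. split; [apply k1|apply k2]; eapply Rlt_le_trans; eauto;
            [apply Rmin_l|apply Rmin_r].
        - intros A B HAB [e [h k]]. exists e. auto.
        - intros [e [h k]]. destruct (Hwy e h) as [n Hn]. exact (k n Hn). }
      destruct (ultra_ext F0 HF) as [p [Hp Hp0]]. exists p. split; auto.
      exists y. split; auto. intros e He. apply Hp0. exists e. split; auto.
      intros n Hn. rewrite d_sym by auto. exact Hn.
    - intros q [Hq _]; auto.
    - intros p q [Hp [yp [Hyp Yp]]] [Hq [yq [Hyq Yq]]]. split; [apply usum_UF; auto|].
      destruct (comp_UF d Hm Hc _ (push_UF (fun n => zpow T Ti n yq) p Hp)) as [z Hz].
      exists z. split.
      + apply (sum_lim w p q yq z); auto.
      + apply (closed_lim Y _ z HYc (UF_F _ (push_UF (fun n => zpow T Ti n yq) p Hp)) Hz).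
        unfold push. apply (F_mono p (fun _ => True)); [apply UF_F; auto| |apply F_top; apply UF_F; auto].
        intros n _. apply Y_zpow; auto.
    - auto. }
  destruct (ellis L L GL) as [p [[_ [y0 [Hy0 Y0]]] [Hp Hpp]]].
  destruct (comp_UF d Hm Hc _ (push_UF (fun n => zpow T Ti n y0) p Hp)) as [z Hz].
  assert (Hz' := sum_lim w p p y0 z Hp Hp Hy0 Hz). rewrite Hpp in Hz'.
  assert (Ez : z = y0) by (apply (uconv_unique d Hm (push f p)); auto; apply UF_F; apply push_UF; auto).
  subst z.
  destruct (classic (w = y0)) as [->|Hne]; auto.
  destruct (Hd w y0 Hne) as [c [hc kc]].
  destruct (F_and_ne p _ _ (UF_F p Hp) (Hy0 (c/2) ltac:(lra)) (Hz (c/2) ltac:(lra))) as [n [k1 k2]].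
  simpl in k1, k2. pose proof (kc n).
  pose proof (d_tri d Hm (zpow T Ti n w) y0 (zpow T Ti n y0)).
  rewrite (d_sym d Hm (zpow T Ti n w) y0) in H0. unfold f in k1. lra.
Qed.
End Semi.


Section Prod.
Context {X1 X2 : Type} (d1 : X1 -> X1 -> R) (d2 : X2 -> X2 -> R)
  (T1 Ti1 : X1 -> X1) (T2 Ti2 : X2 -> X2)
  (S1 : is_system d1 T1 Ti1) (S2 : is_system d2 T2 Ti2)
  (D1 : is_distal d1 T1 Ti1) (D2 : is_distal d2 T2 Ti2) (x1 : X1) (x2 : X2).

Definition dZ (z z' : X1 * X2) := Rmax (d1 (fst z) (fst z')) (d2 (snd z) (snd z')).
Definition TZ (z : X1 * X2) := (T1 (fst z), T2 (snd z)).
Definition TiZ (z : X1 * X2) := (Ti1 (fst z), Ti2 (snd z)).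
Definition z0 := (x1, x2).

Let M1 := proj1 S1.
Let M2 := proj1 S2.

Lemma dZ_metric : is_metric dZ.
Proof.
  unfold dZ. split; [|split; [|split]].
  - intros. pose proof (d_pos d1 M1 (fst x) (fst y)). eapply Rle_trans; [exact H|apply Rmax_l].
  - intros [a b] [a' b']; simpl. split.
    + intro E. pose proof (d_pos d1 M1 a a'). pose proof (d_pos d2 M2 b b').
      pose proof (Rmax_l (d1 a a') (d2 b b')). pose proof (Rmax_r (d1 a a') (d2 b b')).
      f_equal; [apply (d_eq d1 M1)|apply (d_eq d2 M2)]; lra.
    + intro E. inversion E. subst. rewrite (d_xx d1 M1), (d_xx d2 M2). apply Rmax_left. lra.
  - intros. rewrite (d_sym d1 M1), (d_sym d2 M2). reflexivity.
  - intros. pose proof (d_tri d1 M1 (fst x) (fst y) (fst z)).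
    pose proof (d_tri d2 M2 (snd x) (snd y) (snd z)).
    pose proof (Rmax_l (d1 (fst x) (fst y)) (d2 (snd x) (snd y))).
    pose proof (Rmax_r (d1 (fst x) (fst y)) (d2 (snd x) (snd y))).
    pose proof (Rmax_l (d1 (fst y) (fst z)) (d2 (snd y) (snd z))).
    pose proof (Rmax_r (d1 (fst y) (fst z)) (d2 (snd y) (snd z))).
    apply Rmax_lub; lra.
Qed.

Lemma dZ_compact : is_compact dZ.
Proof.
  apply (UF_comp dZ). intros U HU.
  destruct (comp_UF d1 M1 (proj1 (proj2 S1)) _ (push_UF fst U HU)) as [a Ha].
  destruct (comp_UF d2 M2 (proj1 (proj2 S2)) _ (push_UF snd U HU)) as [b Hb].
  exists (a, b). intros e He.
  apply (F_mono U _ _ (UF_F U HU)) with (2 := F_and U _ _ (UF_F U HU) (Ha e He) (Hb e He)).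
  intros z [h1 h2]. unfold dZ; simpl. apply Rmax_lub_lt; auto.
Qed.

Lemma cont_Z f g (h1 : continuous d1 f) (h2 : continuous d2 g) :
  continuous dZ (fun z => (f (fst z), g (snd z))).
Proof.
  intros z e He. destruct (h1 (fst z) e He) as [a [ha ka]].
  destruct (h2 (snd z) e He) as [b [hb kb]].
  exists (Rmin a b). split; [apply Rmin_glb_lt; auto|].
  intros y Hy. unfold dZ in *; simpl. 
  pose proof (Rmax_l (d1 (fst z) (fst y)) (d2 (snd z) (snd y))).
  pose proof (Rmax_r (d1 (fst z) (fst y)) (d2 (snd z) (snd y))).
  pose proof (Rmin_l a b). pose proof (Rmin_r a b).
  apply Rmax_lub_lt; [apply ka|apply kb]; lra.
Qed.

Lemma SZ : is_system dZ TZ TiZ.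
Proof.
  split; [exact dZ_metric|split; [exact dZ_compact|split; [|split; [|split]]]].
  - intros [a b]. unfold TZ, TiZ; simpl. rewrite (proj1 (proj2 (proj2 S1))), (proj1 (proj2 (proj2 S2))). auto.
  - intros [a b]. unfold TZ, TiZ; simpl. rewrite (proj1 (proj2 (proj2 (proj2 S1)))), (proj1 (proj2 (proj2 (proj2 S2)))). auto.
  - apply cont_Z; apply S1 || apply S2.
  - apply cont_Z; apply S1 || apply S2.
Qed.

Let SZs := SZ.
Let HZ1 : forall z, TZ (TiZ z) = z := proj1 (proj2 (proj2 SZs)).
Let HZ2 : forall z, TiZ (TZ z) = z := proj1 (proj2 (proj2 (proj2 SZs))).

Definition inW (z : X1 * X2) : Prop :=
  forall eps, 0 < eps -> exists n, dZ (zpow TZ TiZ n z0) z < eps.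

Lemma inW_z0 : inW z0.
Proof. intros e He. exists 0%Z. simpl. rewrite (d_xx dZ dZ_metric). exact He. Qed.

Lemma inW_map (g : X1 * X2 -> X1 * X2) (gc : continuous dZ g)
  (gz : forall n, exists m, g (zpow TZ TiZ n z0) = zpow TZ TiZ m z0) :
  forall z, inW z -> inW (g z).
Proof.
  intros z Hz e He. destruct (gc z e He) as [del [hd kd]].
  destruct (Hz del hd) as [n Hn]. destruct (gz n) as [m Em]. exists m. rewrite <- Em.
  rewrite (d_sym dZ dZ_metric). apply kd. rewrite (d_sym dZ dZ_metric). exact Hn.
Qed.

Lemma inW_T z : inW z -> inW (TZ z).
Proof.
  apply inW_map. apply SZs. intros n. exists (Z.succ n). rewrite (zpow_succ TZ TiZ HZ1). reflexivity.
Qed.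
Lemma inW_Ti z : inW z -> inW (TiZ z).
Proof.
  apply inW_map. apply SZs. intros n. exists (Z.pred n). rewrite (zpow_pred TZ TiZ HZ1 HZ2). reflexivity.
Qed.

Definition Wt := {z : X1 * X2 | inW z}.
Definition dW (w w' : Wt) := dZ (proj1_sig w) (proj1_sig w').
Definition TW (w : Wt) : Wt := exist _ (TZ (proj1_sig w)) (inW_T _ (proj2_sig w)).
Definition TiW (w : Wt) : Wt := exist _ (TiZ (proj1_sig w)) (inW_Ti _ (proj2_sig w)).
Definition w0 : Wt := exist _ z0 inW_z0.

Lemma W_eq (w w' : Wt) : proj1_sig w = proj1_sig w' -> w = w'.
Proof. destruct w, w'; simpl; intro E; subst. f_equal. apply proof_irrelevance. Qed.

Lemma SW : is_system dW TW TiW.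
Proof.
  assert (MW : is_metric dW).
  { unfold dW. split; [|split; [|split]].
    - intros; apply (d_pos dZ dZ_metric).
    - intros w w'. split.
      + intro E. apply W_eq. apply (d_eq dZ dZ_metric). exact E.
      + intros ->. apply (d_xx dZ dZ_metric).
    - intros; apply (d_sym dZ dZ_metric).
    - intros; apply (d_tri dZ dZ_metric). }
  split; [exact MW|split; [|split; [|split; [|split]]]].
  - apply (UF_comp dW). intros U HU.
    destruct (comp_UF dZ dZ_metric dZ_compact _ (push_UF (@proj1_sig _ _) U HU)) as [z Hz].
    assert (Wz : inW z).
    { intros e He. destruct (F_ne U _ (UF_F U HU) (Hz (e/2) ltac:(lra))) as [w Hw].
      simpl in Hw. destruct (proj2_sig w (e/2) ltac:(lra)) as [n Hn]. exists n.
      pose proof (d_tri dZ dZ_metric (zpow TZ TiZ n z0) (proj1_sig w) z).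
      rewrite (d_sym dZ dZ_metric (proj1_sig w) z) in H. lra. }
    exists (exist _ z Wz). intros e He. exact (Hz e He).
  - intros w. apply W_eq. simpl. apply HZ1.
  - intros w. apply W_eq. simpl. apply HZ2.
  - intros w e He. destruct (proj1 (proj2 (proj2 (proj2 (proj2 SZs)))) (proj1_sig w) e He) as [del [h k]].
    exists del. split; auto. intros y Hy. apply k. exact Hy.
  - intros w e He. destruct (proj2 (proj2 (proj2 (proj2 (proj2 SZs)))) (proj1_sig w) e He) as [del [h k]].
    exists del. split; auto. intros y Hy. apply k. exact Hy.
Qed.

Lemma zpow_W n w : proj1_sig (zpow TW TiW n w) = zpow TZ TiZ n (proj1_sig w).
Proof. apply (zpow_comm (@proj1_sig _ _)); reflexivity. Qed.

Lemma DW : is_distal dW TW TiW.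
Proof.
  intros w w' Hne.
  assert (Hp : proj1_sig w <> proj1_sig w') by (intro E; apply Hne; apply W_eq; exact E).
  destruct (proj1_sig w) as [a b] eqn:Ew. destruct (proj1_sig w') as [a' b'] eqn:Ew'.
  destruct (classic (a = a')) as [Ea|Ea].
  - assert (Eb : b <> b') by (intro E; apply Hp; subst; auto).
    destruct (D2 b b' Eb) as [c [hc kc]]. exists c. split; auto. intros n.
    unfold dW, dZ. rewrite !zpow_W, Ew, Ew'.
    rewrite (zpow_comm snd TZ TiZ T2 Ti2 (fun _ => eq_refl) (fun _ => eq_refl)).
    rewrite (zpow_comm snd TZ TiZ T2 Ti2 (fun _ => eq_refl) (fun _ => eq_refl)).
    simpl. eapply Rle_trans; [apply kc|apply Rmax_r].
  - destruct (D1 a a' Ea) as [c [hc kc]]. exists c. split; auto. intros n.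
    unfold dW, dZ. rewrite !zpow_W, Ew, Ew'.
    rewrite (zpow_comm fst TZ TiZ T1 Ti1 (fun _ => eq_refl) (fun _ => eq_refl)).
    rewrite (zpow_comm fst TZ TiZ T1 Ti1 (fun _ => eq_refl) (fun _ => eq_refl)).
    simpl. eapply Rle_trans; [apply kc|apply Rmax_l].
Qed.

Lemma MW : is_minimal dW TW.
Proof.
  intros Y Yc [y Yy] HY.
  assert (Y0 : Y w0).
  { apply (semisimple dW TW TiW SW DW Y Yc HY w0 y Yy).
    intros e He. destruct (proj2_sig y e He) as [n Hn]. exists n.
    unfold dW. rewrite zpow_W. exact Hn. }
  intros w. apply NNPP; intro Hn. destruct (Yc w Hn) as [e [he k]].
  destruct (proj2_sig w e he) as [n Hnn].
  apply (k (zpow TW TiW n w0)).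
  - unfold dW. rewrite zpow_W. rewrite (d_sym dZ dZ_metric). exact Hnn.
  - apply (Y_zpow dW TW TiW SW Y HY n w0 Y0).
Qed.

Lemma iter_W n : proj1_sig (Defs.iter n TW w0) = (Defs.iter n T1 x1, Defs.iter n T2 x2).
Proof.
  rewrite (iter_comm (@proj1_sig _ _) TW TZ (fun _ => eq_refl)).
  simpl. induction n; simpl; auto. rewrite IHn. reflexivity.
Qed.

End Prod.


Theorem mainTheorem16 (A B : nat -> Prop)
  (hA : forall n, A n -> (1 <= n)%nat)
  (hB : forall n, B n -> (1 <= n)%nat)
  (hAB : pw_recurrence_minimal_distal (fun n => A n \/ B n)) :
  pw_recurrence_minimal_distal A \/ pw_recurrence_minimal_distal B.
Proof.
  destruct (classic (pw_recurrence_minimal_distal A)) as [h|nA]; [left; exact h|].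
  destruct (classic (pw_recurrence_minimal_distal B)) as [h|nB]; [right; exact h|].
  exfalso. apply nA. intros X1 d1 T1 Ti1 S1 M1 D1 x1 e1 He1. apply NNPP; intro N1.
  apply nB. intros X2 d2 T2 Ti2 S2 M2 D2 x2 e2 He2. apply NNPP; intro N2.
  destruct (hAB _ _ _ _ (SW d1 d2 T1 Ti1 T2 Ti2 S1 S2 x1 x2)
              (MW d1 d2 T1 Ti1 T2 Ti2 S1 S2 D1 D2 x1 x2)
              (DW d1 d2 T1 Ti1 T2 Ti2 S1 S2 D1 D2 x1 x2)
              (w0 d1 d2 T1 Ti1 T2 Ti2 S1 S2 x1 x2) (Rmin e1 e2) (Rmin_glb_lt _ _ _ He1 He2))
    as [n [Hn Hd]].
  unfold dW, dZ in Hd. rewrite iter_W in Hd. simpl in Hd.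
  pose proof (Rmax_l (d1 (Defs.iter n T1 x1) x1) (d2 (Defs.iter n T2 x2) x2)).
  pose proof (Rmax_r (d1 (Defs.iter n T1 x1) x1) (d2 (Defs.iter n T2 x2) x2)).
  pose proof (Rmin_l e1 e2). pose proof (Rmin_r e1 e2).
  destruct Hn as [Hn|Hn].
  - apply N1. exists n. split; auto. lra.
  - apply N2. exists n. split; auto. lra.
Qed.
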